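(* For every $n\ge 3$, $\rho_T(C_n)\le 3$, where $C_n$ is the cycle on $n$ vertices.
   Context: Graphs are finite and simple. For $u,v\in(\mathbb{R}\cup\{\infty\})^k$ the min-plus tropical dot product is $u\odot v=\min_i(u_i+v_i)$. A min-plus $k$-tropical dot product representation of $G=(V,E)$ is a map $f:V\to(\mathbb{R}\cup\{\infty\})^k$ with a threshold $t>0$ such that for all distinct $x,y\in V$: $xy\in E$ iff $f(x)\odot f(y)\ge t$. $\rho_T(G)$ is the least $k\ge 1$ for which such a representation exists. *)

(* Defs.v *)
From Stdlib Require Import Reals Lra Lia Arith.
Open Scope R_scope.

(* Extended reals R ∪ {∞}: Some r = r, None = ∞. *)
Definition ereal := option R.

Definition eadd (a b : ereal) : ereal :=
  match a, b with Some x, Some y => Some (x + y) | _, _ => None end.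

Definition emin (a b : ereal) : ereal :=
  match a, b with
  | None, _ => b
  | _, None => a
  | Some x, Some y => Some (Rmin x y)
  end.

Definition ege (a : ereal) (t : R) : Prop :=
  match a with None => True | Some x => t <= x end.

(* vectors in (R ∪ {∞})^k are functions nat -> ereal, coordinates 0..k-1 *)
Definition tvec := nat -> ereal.

(* min-plus tropical dot product over coordinates 0..k-1 (k >= 1 assumed):
   tdot k u v = min_{i<k} (u i + v i); for k = 0 it is ∞ (unused). *)
Fixpoint tdot (k : nat) (u v : tvec) : ereal :=
  match k with
  | O => None
  | S k' => emin (tdot k' u v) (eadd (u k') (v k'))
  end.

Definition graph_adj := nat -> nat -> Prop.

Definition trop_rep (n : nat) (adj : graph_adj) (k : nat) : Prop :=
  exists (f : nat -> tvec) (t : R), 0 < t /\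
    forall x y, (x < n)%nat -> (y < n)%nat -> x <> y ->
      (adj x y <-> ege (tdot k (f x) (f y)) t).

(* rho_T(G) <= m  iff  some 1 <= k <= m admits a representation
   (rho_T is the least such k >= 1). *)
Definition rhoT_le (n : nat) (adj : graph_adj) (m : nat) : Prop :=
  exists k, (1 <= k)%nat /\ (k <= m)%nat /\ trop_rep n adj k.

Definition cycle_adj (n : nat) : graph_adj :=
  fun x y => y = ((x + 1) mod n)%nat \/ x = ((y + 1) mod n)%nat.

(* Main.v *)
Require Import Defs.
From Stdlib Require Import Reals Lra Lia Arith.

Lemma ege_emin a b t : ege (emin a b) t <-> ege a t /\ ege b t.
Proof.
  destruct a as [x|], b as [y|]; simpl; try tauto.
  unfold Rmin; destruct (Rle_dec x y); split; intros; try split; try lra; tauto.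
Qed.

Lemma tdot3 u v t : ege (tdot 3 u v) t <->
  ege (eadd (u 0%nat) (v 0%nat)) t /\ ege (eadd (u 1%nat) (v 1%nat)) t /\
  ege (eadd (u 2%nat) (v 2%nat)) t.
Proof. simpl tdot. rewrite !ege_emin. simpl. tauto. Qed.

Definition pp (i : nat) : R := INR i + 1.
Definition c0 (i : nat) : R := if Nat.even i then 1 + pp i else 1 - pp i.
Definition c1 (i : nat) : R := if Nat.even i then 1 - pp i else 1 + pp i.

Lemma INR2 x y : (x + 2 <= y)%nat -> INR x + 2 <= INR y.
Proof. intro h. apply le_INR in h. rewrite plus_INR in h. simpl in h. lra. Qed.
Lemma INR1 x y : (x = y + 1)%nat -> INR x = INR y + 1.
Proof. intro h. subst. rewrite plus_INR. simpl. lra. Qed.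

Lemma path_ok x y : x <> y ->
  ((y = x + 1)%nat \/ (x = y + 1)%nat) <-> (1 <= c0 x + c0 y /\ 1 <= c1 x + c1 y).
Proof.
  intro hxy. unfold c0, c1, pp.
  pose proof (pos_INR x). pose proof (pos_INR y).
  destruct (Nat.even x) eqn:ex, (Nat.even y) eqn:ey.
  - apply Nat.even_spec in ex, ey. destruct ex as [a ha], ey as [b hb].
    split; [intros [h|h]; lia | lra].
  - apply Nat.even_spec in ex. assert (Nat.Odd y) as oy.
    { apply Nat.odd_spec. rewrite <- Nat.negb_even, ey. reflexivity. }
    destruct (Nat.lt_total x y) as [l|[l|l]]; [|contradiction|].
    + destruct (Nat.eq_dec y (x+1)) as [e|e].
      * pose proof (INR1 _ _ e). split; [intros; lra | intros; lia].
      * assert (h: (x + 2 <= y)%nat) by lia. apply INR2 in h. pose proof (pos_INR x).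
        split; [intros; lia | intros; lra].
    + destruct (Nat.eq_dec x (y+1)) as [e|e].
      * pose proof (INR1 _ _ e). split; [intros; lra | intros; lia].
      * assert (h: (y + 2 <= x)%nat) by lia. apply INR2 in h. pose proof (pos_INR x).
        split; [intros; lia | intros; lra].
  - apply Nat.even_spec in ey. assert (Nat.Odd x) as ox.
    { apply Nat.odd_spec. rewrite <- Nat.negb_even, ex. reflexivity. }
    destruct (Nat.lt_total x y) as [l|[l|l]]; [|contradiction|].
    + destruct (Nat.eq_dec y (x+1)) as [e|e].
      * pose proof (INR1 _ _ e). split; [intros; lra | intros; lia].
      * assert (h: (x + 2 <= y)%nat) by lia. apply INR2 in h. pose proof (pos_INR x).
        split; [intros; lia | intros; lra].
    + destruct (Nat.eq_dec x (y+1)) as [e|e].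
      * pose proof (INR1 _ _ e). split; [intros; lra | intros; lia].
      * assert (h: (y + 2 <= x)%nat) by lia. apply INR2 in h. pose proof (pos_INR x).
        split; [intros; lia | intros; lra].
  - assert (Nat.Odd x) as [a ha].
    { apply Nat.odd_spec. rewrite <- Nat.negb_even, ex. reflexivity. }
    assert (Nat.Odd y) as [b hb].
    { apply Nat.odd_spec. rewrite <- Nat.negb_even, ey. reflexivity. }
    split; [intros [h|h]; lia | lra].
Qed.

Definition c2 (n i : nat) : R := if orb (i =? 0)%nat (i =? n - 2)%nat then 3 else 1.

Definition fv (n i : nat) : tvec := fun k =>
  if (i =? n - 1)%nat then (match k with 2%nat => Some (-1) | _ => None end)
  else match k with
       | 0%nat => Some (c0 i) | 1%nat => Some (c1 i) | _ => Some (c2 n i) end.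

Lemma c2_ge n i : 1 <= c2 n i.
Proof. unfold c2. destruct (orb _ _); lra. Qed.

Lemma end_ok n y : (3 <= n)%nat -> (y < n - 1)%nat ->
  (y = 0%nat \/ (n - 1 = y + 1)%nat) <-> (1 <= -1 + c2 n y).
Proof.
  intros hn hy. unfold c2.
  destruct (Nat.eqb_spec y 0), (Nat.eqb_spec y (n-2)); simpl;
    split; intros; try lra; lia.
Qed.

Theorem mainTheorem18 : forall n : nat, (3 <= n)%nat -> rhoT_le n (cycle_adj n) 3.
Proof.
  intros n hn. exists 3%nat. split; [lia|split;[lia|]].
  exists (fv n), 1. split; [lra|].
  intros x y hx hy hxy. rewrite tdot3. unfold cycle_adj, fv.
  destruct (Nat.eqb_spec x (n-1)) as [ex|ex], (Nat.eqb_spec y (n-1)) as [ey|ey].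
  - lia.
  - rewrite (Nat.mod_small (y+1) n) by lia.
    replace (x + 1)%nat with n by lia. rewrite Nat.mod_same by lia.
    simpl. pose proof (end_ok n y hn ltac:(lia)).
    split; [intros [h|h]; split; try tauto; split; try tauto; apply H; lia
           | intros [_ [_ h]]; apply H in h; lia].
  - rewrite (Nat.mod_small (x+1) n) by lia.
    replace (y + 1)%nat with n by lia. rewrite Nat.mod_same by lia.
    simpl. pose proof (end_ok n x hn ltac:(lia)).
    replace (c2 n x + -1) with (-1 + c2 n x) by ring.
    split; [intros [h|h]; split; try tauto; split; try tauto; apply H; lia
           | intros [_ [_ h]]; apply H in h; lia].
  - rewrite (Nat.mod_small (x+1) n) by lia.
    rewrite (Nat.mod_small (y+1) n) by lia.
    simpl. pose proof (path_ok x y hxy). pose proof (c2_ge n x). pose proof (c2_ge n y).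
    split.
    + intro h. apply H in h. split; [tauto|split;[tauto|lra]].
    + intros [a [b _]]. apply H. tauto.
Qed.
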